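(* Let $\mathbb{K}$ be a field of characteristic zero and let $\mathbb{K}(x)[S_x]$ be the ring of linear recurrence operators, in which $S_x\, a(x) = a(x+1)\, S_x$ for $a\in\mathbb{K}(x)$. Let $m$ be a positive integer and let $L\in\mathbb{K}(x)[S_x]$ be nonzero, with $m$-exponent separation $L=L_0+L_1+\cdots+L_{m-1}$, where $L_i=\sum_{j=0}^{r_i}\ell_{i,j}S_x^{jm+i}$ with $\ell_{i,j}\in\mathbb{K}(x)$. Let $\mathcal{L}_m$ be the $m\times m$ matrix over $\mathbb{K}(x)[S_x]$ whose entry in row $i$ and column $j$ ($0\le i,j\le m-1$) is $L_{(i-j)\bmod m}$. Then there exist a matrix $\mathcal{M}\in\mathbb{K}(x)[S_x]^{m\times m}$ and nonzero operators $T_0,\ldots,T_{m-1}\in\mathbb{K}(x)[S_x]$ such that $\mathcal{M}\cdot\mathcal{L}_m=\mathrm{diag}(T_0,T_1,\ldots,T_{m-1})$.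
   Context: Matrix products are computed in the noncommutative ring $\mathbb{K}(x)[S_x]$: the $(i,j)$ entry of $\mathcal{M}\cdot\mathcal{L}_m$ is $\sum_k \mathcal{M}_{i,k}(\mathcal{L}_m)_{k,j}$. *)

(* Defs.v *)
From HB Require Import structures.
From mathcomp Require Import all_boot all_order all_algebra.
Set Implicit Arguments. Unset Strict Implicit. Unset Printing Implicit Defensive.
Import Order.TTheory GRing.Theory Num.Theory.
Local Open Scope ring_scope.

Notation ratfun K := {fraction {poly K}}.

(* Shift automorphism sigma : a(x) |-> a(x+1) on K(x), computed on any
   representative n/d of the fraction (the result does not depend on it). *)
Definition shift_rf (K : fieldType) (f : ratfun K) : ratfun K :=
  let r := repr f in
  (tofrac (\n_r \Po ('X + 1))) / (tofrac (\d_r \Po ('X + 1))).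

(* Recurrence operators in K(x)[S_x]: an operator sum_k a_k S_x^k is stored
   as its coefficient list, i.e. as an element of {poly (ratfun K)}
   (coefficient of S_x^k at index k).  Addition, zero and equality are those
   of {poly _}; multiplication is the skew (Ore) product given by
   S_x a = sigma(a) S_x, i.e. (a S^i)(b S^j) = a sigma^i(b) S^(i+j). *)
Definition recop (K : fieldType) := {poly ratfun K}.

Definition opmul (K : fieldType) (P Q : recop K) : recop K :=
  \poly_(k < (size P + size Q).-1)
     \sum_(i < k.+1) P`_i * iter i (@shift_rf K) (Q`_(k - i)%N).

Definition exp_sep (K : fieldType) (m : nat) (L : recop K) (i : nat) : recop K :=
  \poly_(k < size L) (if (k %% m == i)%N then L`_k else 0).

Definition sep_matrix (K : fieldType) (m : nat) (L : recop K) : 'M[recop K]_m :=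
  \matrix_(i < m, j < m) exp_sep m L ((i + m - j) %% m)%N.

Definition opmxmul (K : fieldType) (m n p : nat)
    (A : 'M[recop K]_(m, n)) (B : 'M[recop K]_(n, p)) : 'M[recop K]_(m, p) :=
  \matrix_(i < m, j < p) \sum_(k < n) opmul (A i k) (B k j).

Definition opdiag (K : fieldType) (m : nat) (T : 'I_m -> recop K) : 'M[recop K]_m :=
  \matrix_(i < m, j < m) (if i == j then T i else 0).

(* Main.v *)
Require Import Defs.
From HB Require Import structures.
From mathcomp Require Import all_boot all_order all_algebra zify.
Import GRing.Theory.
Local Open Scope ring_scope.

Section Aux.
Variable K : fieldType.
Local Notation F := (ratfun K).
Local Notation sh := (@shift_rf K).

Lemma frac_eq0 (f : F) : (f == 0) = (\n_(repr f) == 0).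
Proof.
rewrite numer0 -[f in LHS]reprK.
have -> : (0 : F) = (\pi_F (ratio0 {poly K}))%qT.
  rewrite -tofrac0. unlock tofrac. rewrite /=.
  congr (\pi _)%qT. apply: val_inj => /=. rewrite /Ratio /insubd.
  by case: insubP => //=; rewrite oner_eq0.
by rewrite eqmodE.
Qed.

Lemma shift_eq0 f : (sh f == 0) = (f == 0).
Proof.
rewrite [RHS]frac_eq0 /shift_rf /=.
have h2 : size ('X + 1 : {poly K}) = 2%N by rewrite size_XaddC.
rewrite mulf_eq0 invr_eq0 !tofrac_eq0 -!size_poly_eq0 !size_comp_poly2 //.
rewrite !size_poly_eq0 (negbTE (denom_ratioP _)) orbF //.
Qed.

Lemma shift0 : sh 0 = 0.
Proof. by apply/eqP; rewrite shift_eq0 eqxx. Qed.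

Lemma iter_shift_eq0 i f : (iter i sh f == 0) = (f == 0).
Proof. elim: i => [|i IH]; first by []. rewrite iterS (shift_eq0 (iter i sh f)); exact IH. Qed.

Lemma iter_shift0 i : iter i sh 0 = 0.
Proof. by apply/eqP; rewrite iter_shift_eq0 eqxx. Qed.
End Aux.
Opaque shift_rf.
Section Aux2.
Variable K : fieldType.
Local Notation F := (ratfun K).
Local Notation sh := (@shift_rf K).

Lemma coef_opmul (P Q : recop K) k :
  (opmul P Q)`_k = \sum_(i < k.+1) P`_i * iter i sh Q`_(k - i).
Proof.
rewrite coef_poly; case: ifP => // /negbT; rewrite -leqNgt => hk.
symmetry; apply: big1 => i _.
case: (ltnP i (size P)) => hi; last by rewrite nth_default // mul0r.
have hQ : (size Q <= k - i)%N by have := ltn_ord i; lia.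
by rewrite (nth_default 0 hQ) iter_shift0 mulr0.
Qed.

Lemma opmul_neq0 (P Q : recop K) : P != 0 -> Q != 0 -> opmul P Q != 0.
Proof.
move=> hP hQ.
have sP : (0 < size P)%N by rewrite size_poly_gt0.
have sQ : (0 < size Q)%N by rewrite size_poly_gt0.
set k := ((size P).-1 + (size Q).-1)%N.
have hk : ((size P).-1 < k.+1)%N by rewrite /k; lia.
suff : (opmul P Q)`_k != 0 by apply: contraNneq => ->; rewrite coef0.
rewrite coef_opmul (bigD1 (Ordinal hk)) //= big1 ?addr0.
  rewrite mulf_neq0 // ?iter_shift_eq0.
    by rewrite -lead_coefE lead_coef_eq0.
  by rewrite /k addKn -lead_coefE lead_coef_eq0.
move=> i /eqP hi.
have hi' : nat_of_ord i != (size P).-1 by apply/eqP => h; apply: hi; apply: val_inj.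
case: (ltnP (size P).-1 i) => h.
  have hP' : (size P <= i)%N by move: h sP; clear; lia.
  by rewrite (nth_default 0 hP') mul0r.
have hQ' : (size Q <= k - i)%N.
  move/eqP: hi' => hi'; have := ltn_ord i; rewrite /k. move: sP sQ h hi'. clear. set p := size P. set q := size Q. move: (nat_of_ord i) => j. lia.
by rewrite (nth_default 0 hQ') iter_shift0 mulr0.
Qed.

Lemma sum_ext (f : nat -> F) p q : (p <= q)%N -> (forall i, (p <= i)%N -> f i = 0) ->
  \sum_(i < p) f i = \sum_(i < q) f i.
Proof.
move=> hpq hf; rewrite (big_ord_widen q f hpq) big_mkcond; apply: eq_bigr => i _.
by case: ifP => // /negbT; rewrite -leqNgt => h; rewrite hf.
Qed.

Lemma sum_ext2 (f : nat -> F) p q : (forall i, (p <= i)%N -> f i = 0) ->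
  (forall i, (q <= i)%N -> f i = 0) ->
  \sum_(i < p) f i = \sum_(i < q) f i.
Proof.
move=> hp hq; rewrite (@sum_ext f p (p + q)) ?leq_addr //.
by rewrite (@sum_ext f q (p + q)) ?leq_addl.
Qed.

Lemma coef_exp_sep m (P : recop K) s t :
  (exp_sep m P s)`_t = if (t %% m == s)%N then P`_t else 0.
Proof.
rewrite coef_poly; case: ifP => //= /negbT; rewrite -leqNgt => h.
by case: ifP => // _; rewrite nth_default.
Qed.
End Aux2.

Section Homog.
Variable K : fieldType.
Local Notation F := (ratfun K).
Local Notation sh := (@shift_rf K).

Lemma nonzero_row p q (B : 'M[F]_(p, q)) : B != 0 -> exists i, row i B != 0.
Proof.
move=> hB; case: (pickP (fun i => row i B != 0)) => [i hi | h]; first by exists i.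
exfalso; apply: (negP hB); apply/eqP/row_matrixP => i; rewrite row0.
by move: (h i) => /negbFE/eqP.
Qed.

Lemma exists_homog (L : recop K) m r : L != 0 -> (r < m)%N ->
  exists Q : recop K, Q != 0 /\ forall k, (k %% m != r)%N -> (opmul Q L)`_k = 0.
Proof.
move=> hL hr.
have hm : (0 < m)%N by move: hr; clear; lia.
set sL := size L. set a := (m * sL.+1)%N. set n := (a + sL)%N.
pose S := [set k : 'I_n | (k %% m != r)%N].
have cardS : (#|S| < a)%N.
  have hf : forall j : 'I_sL.+1, (j * m + r < n)%N.
    move=> j; have hj := ltn_ord j; rewrite /n /a.
    have : (j * m + r < j.+1 * m)%N by rewrite mulSn; move: hr; clear; lia.
    have : (j.+1 * m <= sL.+1 * m)%N by rewrite leq_mul2r hj orbT.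
    move: (j.+1 * m)%N => x; clear; lia.
  pose f j := Ordinal (hf j).
  have finj : injective f.
    move=> j1 j2 /(congr1 val) /= /addIn h; apply: val_inj => /=; apply/eqP.
    by rewrite -(eqn_pmul2r hm) h.
  have sub : f @: setT \subset ~: S.
    apply/subsetP => x /imsetP [j _ ->]; rewrite !inE /= negbK.
    by rewrite modnMDl modn_small.
  have := subset_leq_card sub; rewrite card_imset // cardsT card_ord => h1.
  have := cardsC S; rewrite card_ord => h2.
  rewrite /n in h2; move: h1 h2; clear. move=> h1 h2; move: h2; set x := #|~: S|; set y := #|S|. match goal with |- ?G => idtac G end. lia.
pose e (j : 'I_#|S|) : nat := nat_of_ord (enum_val j).
pose A : 'M[F]_(a, #|S|) := \matrix_(i < a, j < #|S|)
  (if (i <= e j)%N then iter i sh L`_(e j - i) else 0).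
have hker : kermx A != 0.
  apply/eqP => h0; have := mxrank_ker A; rewrite h0 mxrank0.
  have := rank_leq_col A; move: cardS; clear; lia.
have [i0 hi0] := @nonzero_row _ _ _ hker.
set v := row i0 (kermx A).
have hv : v *m A = 0 by rewrite /v -row_mul mulmx_ker row0.
exists (\poly_(i < a) v 0 (insubd i0 i)); split.
  apply: contra hi0 => /eqP hQ; apply/eqP/rowP => j.
  have := congr1 (fun p : {poly F} => p`_j) hQ; rewrite coef_poly ltn_ord coef0 valKd => ->.
  by rewrite mxE.
move=> k hk.
case: (ltnP k n) => hkn; last first.
  rewrite /opmul coef_poly ifF //; apply/negbTE; rewrite -leqNgt.
  have := size_poly a (fun i => v 0 (insubd i0 i)); rewrite /n in hkn; move: hkn; clear. set q := size _. match goal with |- ?G => idtac G end. lia.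
have kS : Ordinal hkn \in S by rewrite inE.
have hj : e (enum_rank_in kS (Ordinal hkn)) = k by rewrite /e enum_rankK_in.
have := congr1 (fun M : 'rV[F]_#|S| => M 0 (enum_rank_in kS (Ordinal hkn))) hv; rewrite !mxE => h; rewrite -[RHS]h.
rewrite coef_opmul.
pose Q := \poly_(i < a) v 0 (insubd i0 i).
transitivity (\sum_(i < k.+1) (fun i : nat => Q`_i * (if (i <= k)%N then iter i sh L`_(k-i) else 0)) i).
  by apply: eq_bigr => i _; rewrite -ltnS ltn_ord.
rewrite (@sum_ext2 K (fun i : nat => Q`_i * (if (i <= k)%N then iter i sh L`_(k-i) else 0)) k.+1 a).
- apply: eq_bigr => i _; rewrite /Q coef_poly ltn_ord valKd ; congr (_ * _); rewrite /A mxE hj //.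
- by move=> i hi; rewrite ifF ?mulr0 //; apply/negbTE; rewrite -ltnNge.
- by move=> i hi; rewrite /Q coef_poly ifF ?mul0r //; apply/negbTE; rewrite -leqNgt.
Qed.
End Homog.

Lemma modsubE m x : (x < m)%N -> ((m - x) %% m = if x == 0 then 0 else m - x)%N.
Proof. case: x => [|x] h /=; first by rewrite subn0 modnn. by rewrite modn_small //; lia. Qed.
Lemma F1 m k u : (0 < m)%N -> (k < m)%N -> (u %% m == (m - k) %% m)%N = (k == (m - u %% m) %% m)%N.
Proof.
move=> hm hk; have ha := ltn_pmod u hm; move: (u %% m)%N ha => a ha.
rewrite !modsubE //; case: (k =P 0)%N; case: (a =P 0)%N => h1 h2; apply/eqP/eqP; lia.
Qed.
Lemma F2 m j u t : (0 < m)%N -> (j < m)%N -> (u <= t)%N ->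
  ((t-u)%%m == ((m - u%%m)%%m+m-j)%%m)%N = (t%%m == (m-j)%%m)%N.
Proof.
move=> hm hj hut.
rewrite -(eqn_modDl u) subnKC // -addnBA; last by lia.
rewrite addnA -(modnDml (u + _)).
have -> : ((u + (m - u %% m) %% m) %% m = 0)%N.
  rewrite -modnDm modn_mod; have ha := ltn_pmod u hm; move: (u %% m)%N ha => a ha.
  rewrite modsubE //; case: (a =P 0)%N => [->|h]; first by rewrite mod0n.
  rewrite subnKC ?modnn //; lia.
by rewrite add0n.
Qed.
Lemma F3 m i j : (i < m)%N -> (j < m)%N -> ((m-j)%%m = (m-i)%%m)%N -> i = j.
Proof. move=> hi hj; rewrite !modsubE //; case: (i =P 0)%N; case: (j =P 0)%N; lia. Qed.

Theorem proposition4p3 (K : fieldType) (charK0 : [pchar K] =i pred0)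
    (m : nat) (m_gt0 : (0 < m)%N) (L : recop K) (L_neq0 : L != 0) :
  exists (M : 'M[recop K]_m) (T : 'I_m -> recop K),
    (forall i, T i != 0) /\ opmxmul M (sep_matrix m L) = opdiag T.
Proof.
have hQ : forall i : 'I_m, exists Q : recop K, Q != 0 /\
    forall k, (k %% m != (m - i) %% m)%N -> (opmul Q L)`_k = 0.
  move=> i; apply: exists_homog L_neq0 _; exact: ltn_pmod.
have [Q hQf] := fin_all_exists hQ.
exists (\matrix_(i < m, k < m) exp_sep m (Q i) ((m - k) %% m)%N).
exists (fun i => opmul (Q i) L); split.
  by move=> i; have [h _] := hQf i; exact: opmul_neq0 h L_neq0.
apply/matrixP => i j; rewrite /opmxmul /opdiag !mxE.
apply/polyP => t; rewrite coef_sum.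
under eq_bigr => k _ do rewrite coef_opmul /sep_matrix.
under eq_bigr => k _ do under eq_bigr => u _ do rewrite !mxE !coef_exp_sep.
rewrite exchange_big /=.
have step : forall u : 'I_t.+1,
   \sum_(k < m) ((if (u %% m == (m - k) %% m)%N then (Q i)`_u else 0) *
     iter u (@shift_rf K) (if ((t - u) %% m == (k + m - j) %% m)%N then L`_(t - u) else 0))
   = if (t %% m == (m - j) %% m)%N then (Q i)`_u * iter u (@shift_rf K) L`_(t - u) else 0.
  move=> u.
  have hk0 : ((m - u %% m) %% m < m)%N by exact: ltn_pmod.
  rewrite (bigD1 (Ordinal hk0)) //= big1 ?addr0.
    rewrite (@F1 m _ u m_gt0 hk0) eqxx F2 //; last by rewrite -ltnS ltn_ord.
    by case: ifP => _ //; rewrite iter_shift0 mulr0.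
  move=> k /eqP hk; rewrite F1 //; case: eqP => [hk'|_]; last by rewrite mul0r.
  by exfalso; apply: hk; apply: val_inj.
under eq_bigr => u _ do rewrite step.
have hQi := (hQf i).2.
case: (i =P j) => [<-|hij].
  case h: (t %% m == (m - i) %% m)%N.
    by rewrite coef_opmul.
  rewrite hQi ?h //; by apply: big1 => u _.
rewrite coef0; case h: (t %% m == (m - j) %% m)%N; last by apply: big1 => u _.
rewrite -coef_opmul hQi //; apply/negP => /eqP h2.
move/eqP: h; rewrite h2 => /F3 h3; apply: hij; apply: val_inj; symmetry; exact: h3.
Qed.
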